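(* The generating series $f(q;x)=\sum_\gamma q^{\omega_H(\gamma)+\omega_{DU}(\gamma)}x^{n(\gamma)}$, where $\gamma$ ranges over all Schröder paths and $n(\gamma)$ is the semi-length, is $$f(q;x)=\frac{1-x-\sqrt{1-2(1+2q)x+(1-2q)^2x^2}}{2qx\,(1+(1-q)x)}.$$
   Context: Steps: $U=(1,1)$, $D=(1,-1)$, $H=(2,0)$. A Schröder path of semi-length $n$ is a lattice path from $(0,0)$ to $(2n,0)$ with steps $U,D,H$ never going below the $x$-axis. Paths are identified with words of steps; $\omega_H(\gamma)$ is the number of $H$ steps and $\omega_{DU}(\gamma)$ the number of occurrences of the factor $DU$ in $\gamma$. *)

(* Defs.v *)
From HB Require Import structures.
From mathcomp Require Import all_boot all_order all_algebra.
Set Implicit Arguments. Unset Strict Implicit. Unset Printing Implicit Defensive.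
Import Order.TTheory GRing.Theory Num.Theory.

(* Steps U=(1,1), D=(1,-1), H=(2,0). *)
Inductive step := U | D | H.

Fixpoint words (m : nat) : seq (seq step) :=
  if m is m'.+1 then
    flatten [seq [seq s :: w | w <- words m'] | s <- [:: U; D; H]]
  else [:: [::]].

Definition words_upto (m : nat) : seq (seq step) :=
  flatten [seq words k | k <- iota 0 m.+1].

Fixpoint schroder_from (h : nat) (w : seq step) : bool :=
  match w with
  | [::] => h == 0
  | U :: w' => schroder_from h.+1 w'
  | D :: w' => (0 < h) && schroder_from h.-1 w'
  | H :: w' => schroder_from h w'
  end.

Definition is_schroder (w : seq step) : bool := schroder_from 0 w.

(* Horizontal extent of the path (endpoint abscissa). *)
Definition xlen (w : seq step) : nat :=
  (\sum_(s <- w) (match s with H => 2 | _ => 1 end))%N.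

Definition omegaH (w : seq step) : nat :=
  count (fun s => if s is H then true else false) w.

Fixpoint omegaDU (w : seq step) : nat :=
  match w with
  | D :: ((U :: _) as w') => (omegaDU w').+1
  | _ :: w' => omegaDU w'
  | [::] => 0
  end.

Local Open Scope ring_scope.

Definition fps (R : Type) := nat -> R.

Definition fps_mul (R : nzRingType) (a b : fps R) : fps R :=
  fun n => \sum_(i < n.+1) a i * b (n - i)%N.

Definition fps_of_poly (R : nzRingType) (p : {poly R}) : fps R := fun n => p`_n.

Definition is_fsqrt (R : nzRingType) (s d : fps R) : Prop :=
  s 0%N = 1 /\ forall n, fps_mul s s n = d n.

Definition q : {poly rat} := 'X.

(* f(q;x) = sum over Schroder paths gamma of q^(omegaH + omegaDU) x^(semilength);
   coefficient of x^n: sum over Schroder paths of semi-length n (x-extent 2n,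
   hence at most 2n steps). *)
Definition schroder_gf : fps {poly rat} := fun n =>
  \sum_(w <- words_upto n.*2 | is_schroder w && (xlen w == n.*2)%N)
     q ^+ (omegaH w + omegaDU w).

(* Polynomials in x over Q[q]; x is the variable of {poly {poly rat}}. *)
Definition Qx : {poly {poly rat}} := q%:P.

Definition Delta : {poly {poly rat}} :=
  1 - 2%:R * (1 + 2%:R * Qx) * 'X + (1 - 2%:R * Qx) ^+ 2 * 'X ^+ 2.

Definition denom : {poly {poly rat}} :=
  2%:R * Qx * 'X * (1 + (1 - Qx) * 'X).

Definition numer_poly : {poly {poly rat}} := 1 - 'X.

(* Main.v *)
Require Import Defs.
From HB Require Import structures.
From mathcomp Require Import all_boot all_order all_algebra.
From mathcomp Require Import zify ring.
Import GRing.Theory.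
Local Open Scope ring_scope.

Notation sf := schroder_from.
Definition isU (w : seq step) := if w is U :: _ then true else false.
Definition isD (s : step) := if s is D then true else false.

Lemma sf_cat k a h b : sf k a -> sf (h + k) (a ++ b) = sf h b.
Proof.
elim: a k => [|s a IH] k /=; first by move/eqP->; rewrite addn0.
case: s => /=.
- by move=> H; rewrite -addnS IH.
- case/andP=> kp H; rewrite (_ : 0 < h + k)%N; last by lia.
  rewrite (_ : (h + k).-1 = h + k.-1)%N; last by lia.
  by rewrite IH.
- by move=> H; rewrite IH.
Qed.

Lemma sf_split w h : sf h.+1 w -> exists a b, w = a ++ D :: b /\ sf 0 a /\ sf h b.
Proof.
move: {2}(size w) (leqnn (size w)) => n; elim: n w h => [|n IH] w h.
  by case: w.
case: w => [|s w] //= Hs.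
case: s => /=.
- move=> /(IH w h.+1 Hs) [a1 [b1 [E1 [S1 T1]]]].
  have Hb : (size b1 <= n)%N by move: Hs; rewrite E1 size_cat /=; lia.
  case: (IH b1 h Hb T1) => [a2 [b2 [E2 [S2 T2]]]].
  exists (U :: a1 ++ D :: a2), b2; split; first by rewrite E1 E2 /= -catA.
  split=> //=. by rewrite -(add0n 1%N) addnC sf_cat //.
- by move=> Hw; exists [::], w.
- move=> /(IH w h Hs) [a [b [E [S T]]]].
  by exists (H :: a), b; rewrite E.
Qed.

Lemma sf_uniq a b a' b' : sf 0 a -> sf 0 a' -> a ++ D :: b = a' ++ D :: b' ->
  size a = size a'.
Proof.
wlog: a b a' b' / (size a <= size a')%N.
  move=> W Sa Sa' E; case: (leqP (size a) (size a')) => L.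
    exact: (W a b a' b').
  symmetry; apply: (W a' b' a b) => //; first by lia.
move=> L Sa Sa' E; rewrite leq_eqVlt in L; case/orP: L => [/eqP//|L].
have: a' = take (size a') (a ++ D :: b) by rewrite E take_size_cat.
rewrite take_cat ltnNge (ltnW L) /=.
case E2: (size a' - size a)%N => [|m]; first by lia.
move=> E3; move: Sa'; rewrite E3 /= -(add0n 0%N) sf_cat //.
Qed.

Definition cond k w := isD (nth H w k) && sf 0 (take k w) && sf 0 (drop k.+1 w).

Lemma decomp_cond k w : (k < size w)%N -> cond k w ->
  w = take k w ++ D :: drop k.+1 w.
Proof.
move=> Hk /andP[/andP[Hd _] _].
rewrite -{1}(cat_take_drop k w) (drop_nth H Hk).
by case: (nth H w k) Hd.
Qed.

Lemma sum_eqind (R : nzRingType) m p (c : nat -> R) :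
  \sum_(k < m) (((k : nat) == p)%:R * c k) = (p < m)%N%:R * c p.
Proof.
elim: m => [|m IH]; first by rewrite big_ord0 ltn0 mul0r.
rewrite big_ord_recr /= IH; case: (ltngtP p m) => H1.
- by rewrite ltnS ltnW // mul0r addr0.
- by rewrite ltnS leqNgt H1 !mul0r addr0.
- by rewrite H1 ltnSn mul0r add0r.
Qed.

Lemma count_cond (R : nzRingType) w :
  \sum_(k < size w) (cond k w)%:R = (sf 1 w)%:R :> R.
Proof.
case S1: (sf 1 w).
- case: (@sf_split w 0 S1) => a [b [E [Sa Sb]]].
  have Ha : (size a < size w)%N by rewrite E size_cat /=; lia.
  transitivity (\sum_(k < size w) (((k:nat) == size a)%:R * (1 : R))).
    apply: eq_bigr => k _; rewrite mulr1; congr ((nat_of_bool _) %:R).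
    apply/idP/eqP.
    + move=> C; have := @decomp_cond k w (ltn_ord k) C.
      move: C => /andP[/andP[_ C1] _] E2.
      have := @sf_uniq _ (drop k.+1 w) _ b C1 Sa; rewrite -E2 -E => /(_ erefl).
      by rewrite size_take ltn_ord.
    + move=> ->; rewrite /cond E take_size_cat // nth_cat ltnn subnn /= Sa.
      by rewrite -cat_rcons drop_size_cat ?size_rcons.
  by rewrite (@sum_eqind R (size w) (size a) (fun _ => 1)) Ha mulr1.
- rewrite big1 // => k _; case C: (cond k w) => //.
  have E := @decomp_cond k w (ltn_ord k) C.
  move: C S1 => /andP[/andP[_ C1] C2]; rewrite E -(add0n 1%N) addnC sf_cat //=.
  by rewrite C2.
Qed.
Section Sums.
Context {R : nzRingType}.

Lemma sum_words0 (F : seq step -> R) : \sum_(w <- words 0) F w = F [::].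
Proof. by rewrite /= big_cons big_nil addr0. Qed.

Lemma sum_wordsS L (F : seq step -> R) : \sum_(w <- words L.+1) F w =
  \sum_(w <- words L) F (U :: w) + \sum_(w <- words L) F (D :: w)
  + \sum_(w <- words L) F (H :: w).
Proof.
rewrite [words _]/= cats0 !big_cat !big_map; exact: addrA.
Qed.

Lemma eq_sum_words L (F G : seq step -> R) :
  (forall w, size w = L -> F w = G w) ->
  \sum_(w <- words L) F w = \sum_(w <- words L) G w.
Proof.
elim: L F G => [|L IH] F G E; first by rewrite !sum_words0 E.
rewrite !sum_wordsS; congr (_ + _ + _); apply: IH => w Hw; apply: E => /=;
  by rewrite Hw.
Qed.

Lemma sum_words_cat k j (F : seq step -> R) :
  \sum_(w <- words (k + j)) F w =
  \sum_(a <- words k) \sum_(b <- words j) F (a ++ b).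
Proof.
elim: k F => [|k IH] F; first by rewrite sum_words0.
by rewrite addSn !sum_wordsS !IH.
Qed.

Definition Wsum N (F : seq step -> R) := \sum_(L < N) \sum_(w <- words L) F w.

Lemma eq_Wsum N F G : (forall w, F w = G w) -> Wsum N F = Wsum N G.
Proof. by move=> E; apply: eq_bigr => L _; apply: eq_bigr. Qed.

Lemma Wsum_ext N M F : (N <= M)%N -> (forall w, (N <= size w)%N -> F w = 0) ->
  Wsum M F = Wsum N F.
Proof.
move=> NM E; rewrite /Wsum -(subnKC NM) big_split_ord /=.
rewrite [X in _ + X]big1 ?addr0 // => L _.
rewrite (@eq_sum_words _ F (fun _ => 0)); first by rewrite big1.
by move=> w Hw; apply: E; rewrite Hw leq_addr.
Qed.

Lemma WsumS N F : Wsum N.+1 F = F [::] + Wsum N (fun w => F (U :: w))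
  + Wsum N (fun w => F (D :: w)) + Wsum N (fun w => F (H :: w)).
Proof.
rewrite /Wsum big_ord_recl sum_words0 -!addrA; congr (_ + _).
under eq_bigr do rewrite sum_wordsS.
by rewrite !big_split /= addrA.
Qed.

End Sums.

Lemma xlen_nil : xlen [::] = 0%N.
Proof. by rewrite /xlen big_nil. Qed.
Lemma xlen_cons s w : xlen (s :: w) = ((if s is H then 2 else 1) + xlen w)%N.
Proof. by rewrite /xlen big_cons. Qed.
Lemma xlen_cat a b : xlen (a ++ b) = (xlen a + xlen b)%N.
Proof. by rewrite /xlen big_cat. Qed.
Lemma size_xlen w : (size w <= xlen w)%N.
Proof. elim: w => [|s w IH]; rewrite ?xlen_nil ?xlen_cons //=; case: s; lia. Qed.
Lemma xlen_odd h w : sf h w -> odd (xlen w) = odd h.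
Proof.
elim: w h => [|s w IH] h /=; first by move/eqP->; rewrite xlen_nil.
rewrite xlen_cons; case: s => /=.
- by move/IH=> ->; rewrite /= negbK.
- by case/andP=> hp /IH ->; case: h hp => //= h _; rewrite negbK.
- by move/IH=> <-; rewrite negbK add0n.
Qed.

Lemma omegaDU_cons s w : omegaDU (s :: w) = (omegaDU w + ((isD s) && (isU w)))%N.
Proof. by case: s; case: w => [|[] w] //=; rewrite ?addn0 ?addn1. Qed.

Lemma omegaDU_catD a b : omegaDU (a ++ D :: b) = (omegaDU a + omegaDU (D :: b))%N.
Proof.
elim: a => [|s a IH] //.
rewrite cat_cons omegaDU_cons IH [omegaDU (s :: a)]omegaDU_cons.
have -> : isU (a ++ D :: b) = isU a by case: a {IH}.
lia.
Qed.

Definition wt (w : seq step) : {poly rat} := q ^+ (omegaH w + omegaDU w).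

Lemma wt_split a b : wt (U :: a ++ D :: b) =
  wt a * (wt b * (if isU b then q else 1)).
Proof.
rewrite /wt /omegaH /= count_cat /= -/(omegaH a) -/(omegaH b).
rewrite omegaDU_catD omegaDU_cons /=.
case: (isU b); rewrite mulrA -exprD ?mulr1 -?exprSr; congr (_ ^+ _); lia.
Qed.
Definition qU (b : seq step) : {poly rat} := if isU b then q else 1.
Definition phi n := Wsum n.*2.+1
  (fun w => if sf 0 w && (xlen w == n.*2) then wt w else 0).
Definition gam n := Wsum n.*2.+1
  (fun w => if sf 0 w && (xlen w == n.*2) && isU w then wt w else 0).
Definition eps n := Wsum n.*2.+1
  (fun w => if sf 0 w && (xlen w == n.*2) then wt w * qU w else 0).

Lemma Wsum0 (R : nzRingType) N (F : seq step -> R) : (forall w, F w = 0) -> Wsum N F = 0.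
Proof. by move=> E; rewrite /Wsum big1 // => L _; rewrite big1. Qed.

Lemma WsumDM (R : nzRingType) N (F G : seq step -> R) c :
  Wsum N (fun w => F w + c * G w) = Wsum N F + c * Wsum N G.
Proof.
rewrite /Wsum mulr_sumr -big_split; apply: eq_bigr => L _.
by rewrite mulr_sumr -big_split.
Qed.

Lemma eps_eq n : eps n = phi n + (q - 1) * gam n.
Proof.
rewrite /eps /phi /gam -WsumDM; apply: eq_Wsum => w.
rewrite /qU; case: (sf 0 w && _) => /=; last by rewrite mulr0 addr0.
by case: (isU w); rewrite ?mulr1 ?mulr0 ?addr0 //; ring.
Qed.

Lemma phi_eq n : phi n = (n == 0)%:R + (if n is n'.+1 then q * phi n' else 0) + gam n.
Proof.
rewrite /phi /gam !WsumS /= xlen_nil.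
have E1 : Wsum n.*2 (fun w => if sf 0 w && (xlen (H :: w) == n.*2) && false then wt (H :: w) else 0) = 0.
  by apply: Wsum0 => w; rewrite andbF.
have E2 : Wsum n.*2 (fun=> 0 : {poly rat}) = 0 by apply: Wsum0.
have E3 : Wsum n.*2 (fun w => if sf 1 w && (xlen (U :: w) == n.*2) && true then wt (U :: w) else 0) = Wsum n.*2 (fun w => if sf 1 w && (xlen (U :: w) == n.*2) then wt (U :: w) else 0).
  by apply: eq_Wsum => w; rewrite andbT.
rewrite E1 E2 E3 andbF !addr0 add0r -addrA [X in _ + X = _]addrC addrA; clear E1 E2 E3.
congr (_ + _); congr (_ + _).
  by case: n => [|n] //=; rewrite /wt /= expr0.
case: n => [|n]; first by rewrite /Wsum big_ord0.
rewrite doubleS (@Wsum_ext _ n.*2.+1 n.*2.+2) //.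
  rewrite /Wsum mulr_sumr; apply: eq_bigr => L _; rewrite mulr_sumr.
  apply: eq_bigr => w _; rewrite /= xlen_cons /= !add2n !eqSS.
  case: (_ && _); rewrite ?mulr0 // /wt /omegaH /=.
  by rewrite -exprS addSn.
move=> w Hw; rewrite /= xlen_cons; have := size_xlen w => Hs.
by rewrite (_ : (2 + xlen w == n.*2.+2)%N = false) ?andbF //; apply/eqP; lia.
Qed.

Lemma schroder_phi n : schroder_gf n = phi n.
Proof.
rewrite /schroder_gf /words_upto big_flatten big_map.
rewrite (_ : iota 0 n.*2.+1 = index_iota 0 n.*2.+1); last by rewrite /index_iota subn0.
by rewrite big_mkord; apply: eq_bigr => L _; rewrite big_mkcond.
Qed.
Definition Tn n w : {poly rat} := if (xlen w).+1 == n.*2 then wt (U :: w) else 0.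

Lemma gam_U n : gam n = Wsum n.*2 (fun w => (sf 1 w)%:R * Tn n w).
Proof.
rewrite /gam WsumS /= andbF.
rewrite [X in _ + _ + X + _]Wsum0 // [X in _ + _ + X]Wsum0 ?addr0 ?add0r;
  last by move=> w; rewrite andbF.
apply: eq_Wsum => w; rewrite andbT /Tn xlen_cons add1n.
by case: (sf 1 w); rewrite ?mul1r ?mul0r.
Qed.

Lemma cond_cat a s b : cond (size a) (a ++ s :: b) = isD s && sf 0 a && sf 0 b.
Proof.
by rewrite /cond take_size_cat // nth_cat ltnn subnn /= -cat_rcons drop_size_cat ?size_rcons.
Qed.

Lemma split_at (R : nzRingType) L k (F : seq step -> R) : (k < L)%N ->
  \sum_(w <- words L) F w = \sum_(a <- words k) \sum_(b <- words (L - k.+1))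
     (F (a ++ U :: b) + F (a ++ D :: b) + F (a ++ H :: b)).
Proof.
move=> kL; set j := (L - k.+1)%N.
have -> : L = (k + j.+1)%N by rewrite /j; lia.
rewrite sum_words_cat; apply: eq_bigr => a _.
by rewrite sum_wordsS -!big_split.
Qed.

Lemma triangle0 (R : nzRingType) N (Hh : nat -> nat -> R) :
  \sum_(L < N) \sum_(k < L) Hh k (L - k.+1)%N =
  \sum_(k < N) \sum_(j < N - k.+1) Hh k j.
Proof.
elim: N => [|N IH]; first by rewrite !big_ord0.
rewrite big_ord_recr /= IH [RHS]big_ord_recr /= subnn big_ord0 addr0.
rewrite -big_split /=; apply: eq_bigr => k _.
by rewrite subSS -(subnSK (ltn_ord k)) big_ord_recr.
Qed.

Lemma triangle (R : nzRingType) N (Hh : nat -> nat -> R) :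
  (forall k j, (N <= k + j.+1)%N -> Hh k j = 0) ->
  \sum_(L < N) \sum_(k < L) Hh k (L - k.+1)%N =
  \sum_(k < N) \sum_(j < N) Hh k j.
Proof.
move=> Z; rewrite triangle0; apply: eq_bigr => k _.
rewrite (big_ord_widen N (Hh k)) ?leq_subr // big_mkcond /=.
apply: eq_bigr => j _; case: ifP => // h; rewrite Z //.
move/negbT: h; rewrite -leqNgt; lia.
Qed.
Definition V n a b : {poly rat} :=
  if sf 0 a && sf 0 b && ((xlen a + xlen b).+2 == n.*2) then wt a * (wt b * qU b) else 0.

Lemma gam_V n : gam n = \sum_(k < n.*2) \sum_(j < n.*2)
   \sum_(a <- words k) \sum_(b <- words j) V n a b.
Proof.
rewrite gam_U /Wsum -(@triangle _ _ (fun k j => \sum_(a <- words k) \sum_(b <- words j) V n a b)).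
  apply: eq_bigr => L _.
  transitivity (\sum_(w <- words L) \sum_(k < L) (cond k w)%:R * Tn n w).
    apply: eq_sum_words => w Hw; rewrite -(@count_cond {poly rat} w) mulr_suml.
    by rewrite Hw.
  rewrite exchange_big; apply: eq_bigr => k _; rewrite (split_at _ _ _ _ (ltn_ord k)).
  apply: eq_sum_words => a Ha; apply: eq_bigr => b _.
  rewrite -Ha !cond_cat /= !mul0r add0r addr0 /Tn /V.
  rewrite xlen_cat xlen_cons wt_split /qU.
  case: (sf 0 a && sf 0 b); rewrite ?mul0r ?mul1r //.
  by rewrite (_ : ((xlen a + (1 + xlen b)).+1) = (xlen a + xlen b).+2)%N //; lia.
move=> k j Hkj.
rewrite (@eq_sum_words _ k _ (fun _ => 0)); first by rewrite big1.
move=> a Ha; rewrite (@eq_sum_words _ j _ (fun _ => 0)); first by rewrite big1.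
move=> b Hb; rewrite /V; have := size_xlen a; have := size_xlen b => h1 h2.
by rewrite (_ : ((xlen a + xlen b).+2 == n.*2) = false) ?andbF //; apply/eqP; lia.
Qed.
Definition Aa i a : {poly rat} := if sf 0 a && (xlen a == i.*2) then wt a else 0.
Definition Bb n i b : {poly rat} :=
  if sf 0 b && (xlen b == (n.-1 - i).*2) then wt b * qU b else 0.

Lemma xlen_even w : sf 0 w -> ((xlen w)./2).*2 = xlen w.
Proof.
move=> S; have := odd_double_half (xlen w).
by rewrite (@xlen_odd 0 w S) /= add0n.
Qed.

Lemma eqn_double m k : (m.*2 == k.*2) = (m == k).
Proof. by apply/eqP/eqP => h; lia. Qed.

Lemma V_split n a b : V n a b = \sum_(i < n) Aa i a * Bb n i b.
Proof.
rewrite /V /Aa /Bb.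
case Sa: (sf 0 a); last by rewrite /= big1 // => i _; rewrite mul0r.
case Sb: (sf 0 b); last by rewrite /= big1 // => i _; rewrite mulr0.
rewrite /= -(@xlen_even a Sa) -(@xlen_even b Sb).
set p := (xlen a)./2; set r := (xlen b)./2.
rewrite (eq_bigr (fun i : 'I_n => ((i:nat) == p)%:R * ((r == n.-1 - i)%N%:R * (wt a * (wt b * qU b))))); last first.
  move=> i _; rewrite !eqn_double (eq_sym p).
  by case: eqP; case: eqP => /=; rewrite ?mul0r ?mulr0 ?mul1r ?mulr1.
rewrite (sum_eqind _ _ _ (fun i => (r == n.-1 - i)%N%:R * _)).
case: (ltnP p n) => h; case: eqP => h2; case: eqP => h3 /=;
  rewrite ?mul1r ?mul0r //; exfalso; lia.
Qed.

Lemma prodW N (F G : seq step -> {poly rat}) : Wsum N F * Wsum N G =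
  \sum_(k < N) \sum_(j < N) \sum_(a <- words k) \sum_(b <- words j) F a * G b.
Proof.
rewrite /Wsum big_distrlr; apply: eq_bigr => k _; apply: eq_bigr => j _.
by rewrite big_distrlr.
Qed.

Lemma gam_eq n : gam n = \sum_(i < n) phi i * eps (n.-1 - i).
Proof.
rewrite gam_V.
under eq_bigr => k _ do under eq_bigr => j _ do under eq_bigr => a _ do
  under eq_bigr => b _ do rewrite V_split.
under eq_bigr => k _ do under eq_bigr => j _ do under eq_bigr => a _ do
  rewrite exchange_big.
under eq_bigr => k _ do under eq_bigr => j _ do rewrite exchange_big.
under eq_bigr => k _ do rewrite exchange_big.
rewrite exchange_big; apply: eq_bigr => i _; rewrite -prodW.
have hi := ltn_ord i.
congr (_ * _).
  rewrite /phi (@Wsum_ext _ (i.*2.+1) n.*2); first by [].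
    by rewrite ltn_double.
  move=> w Hw; rewrite /Aa; have := size_xlen w => h.
  by rewrite (_ : (xlen w == i.*2) = false) ?andbF //; apply/eqP; lia.
rewrite /eps (@Wsum_ext _ ((n.-1 - i).*2.+1) n.*2); first by [].
  by rewrite ltn_double; lia.
move=> w Hw; rewrite /Bb; have := size_xlen w => h.
by rewrite (_ : (xlen w == (n.-1 - i).*2) = false) ?andbF //; apply/eqP; lia.
Qed.
Lemma phi0 : phi 0 = 1.
Proof.
rewrite phi_eq /gam /= /Wsum big_ord_recr big_ord0 /= sum_words0 /=.
by rewrite andbF !addr0.
Qed.

Lemma eps_phi j : eps j = q * phi j + (1 - q) * (j == 0)%:R
  + (q - q ^+ 2) * (if j is j'.+1 then phi j' else 0).
Proof.
rewrite eps_eq; have := phi_eq j.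
case: j => [|j] /= E.
  have -> : gam 0 = phi 0 - 1 by rewrite E; ring.
  ring.
have -> : gam j.+1 = phi j.+1 - q * phi j by rewrite E; ring.
ring.
Qed.

Definition cc m := \sum_(i < m.+1) phi i * phi (m - i).

Lemma conv_eps n : \sum_(i < n.+1) phi i * eps (n - i) =
  q * cc n + (1 - q) * phi n + (q - q ^+ 2) * (if n is n'.+1 then cc n' else 0).
Proof.
under eq_bigr do rewrite eps_phi !mulrDr.
rewrite !big_split /=; congr (_ + _ + _).
- by rewrite /cc mulr_sumr; apply: eq_bigr => i _; rewrite mulrCA.
- rewrite big_ord_recr /= subnn /= mulr1 big1 ?add0r; first by rewrite mulrC.
  move=> i _; have := ltn_ord i => h.
  by rewrite (_ : (n - i == 0)%N = false) /= ?mulr0 //; apply/eqP; lia.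
- under eq_bigr do rewrite mulrCA.
  rewrite -mulr_sumr; congr (_ * _).
  rewrite big_ord_recr /= subnn /= !mulr0 addr0.
  under eq_bigr => i _ do rewrite -(subnSK (ltn_ord i)).
  case: n => [|n]; first by rewrite big_ord0.
  by rewrite /cc; apply: eq_bigr => i _; rewrite subSS.
Qed.

Lemma rec n : phi n.+1 = phi n + q * cc n
  + (if n is n'.+1 then q * (1 - q) * cc n' else 0).
Proof.
rewrite phi_eq /= add0r gam_eq /= conv_eps.
by case: n => [|n]; ring.
Qed.
Definition PP n : {poly {poly rat}} := \poly_(i < n.+1) phi i.
Definition QQ n : {poly {poly rat}} :=
  Qx * ('X * (PP n * PP n)) + Qx * ('X * ('X * (PP n * PP n)))
  - Qx * (Qx * ('X * ('X * (PP n * PP n)))) - PP n + 'X * PP n + 1.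

Lemma PP2 n j : (j <= n)%N -> (PP n * PP n)`_j = cc j.
Proof.
move=> jn; rewrite coefM /cc; apply: eq_bigr => i _.
rewrite /PP !coef_poly; have := ltn_ord i => h.
by rewrite ifT ?ifT //; lia.
Qed.

Lemma PPc n m : (m <= n)%N -> (PP n)`_m = phi m.
Proof. by move=> h; rewrite /PP coef_poly ltnS h. Qed.

Lemma QQ0 n k : (k <= n)%N -> (QQ n)`_k = 0.
Proof.
move=> kn; rewrite /QQ !(coefD, coefN, coefB, coefCM, coefXM, coef1) /Qx /=.
case: k kn => [|k] kn /=.
  by rewrite PPc // phi0; ring.
rewrite PP2 ?PPc; try lia.
case: k kn => [|k] kn /=.
  by rewrite rec /=; ring.
rewrite PP2; last by lia.
rewrite rec; ring.
Qed.

Definition SS (n : nat) : {poly rat} :=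
  numer_poly`_n - fps_mul (fps_of_poly denom) schroder_gf n.

Lemma SS_coef n m : (m <= n)%N -> SS m = (numer_poly - denom * PP n)`_m.
Proof.
move=> mn; rewrite /SS [RHS]coefB [X in _ = _ - X]coefM /fps_mul /fps_of_poly; congr (_ - _).
apply: eq_bigr => i _; rewrite schroder_phi /PP coef_poly ifT //; lia.
Qed.

Lemma key_id n : (numer_poly - denom * PP n) ^+ 2 =
  Delta + 'X * (4%:R * (Qx * QQ n) + 4%:R * (Qx * ('X * QQ n))
                - 4%:R * (Qx * (Qx * ('X * QQ n)))).
Proof. rewrite /numer_poly /denom /Delta /QQ; ring. Qed.

Theorem mainTheorem12 :
  exists S : fps {poly rat},
    is_fsqrt S (fps_of_poly Delta) /\
    forall n : nat,
      fps_mul (fps_of_poly denom) schroder_gf n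
      = fps_of_poly numer_poly n - S n.
Proof.
exists SS; split; last first.
  by move=> n; rewrite /SS /fps_of_poly opprB addrC subrK.
split.
  rewrite (@SS_coef 0 0) // coefB.
  have -> : denom = 'X * (2%:R * Qx * (1 + (1 - Qx) * 'X)) by rewrite /denom; ring.
  by rewrite -mulrA coefXM /numer_poly coefB coef1 coefX /= !subr0.
move=> n; rewrite /fps_mul /fps_of_poly.
transitivity (((numer_poly - denom * PP n) ^+ 2)`_n).
  rewrite expr2 coefM; apply: eq_bigr => i _; have := ltn_ord i => h.
  by rewrite !(@SS_coef n) //; lia.
rewrite key_id coefD coefXM; case: n => [|m] /=; first by rewrite addr0.
rewrite !(coefD, coefN, coefB) !mulr_natl !coefMn /Qx !coefCM coefXM.
rewrite !QQ0 //; last by lia.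
by rewrite !if_same !mulr0 !mul0rn !subr0 !addr0.
Qed.
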